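(* Let $f\in\mathbb{F}[Y,Z]$ and let $g\in\mathbb{F}[Y]$ or $g\in\mathbb{F}[Z]$. Then $\mathrm{maxrank}(M_{fg})\le\mathrm{maxrank}(M_f)$.
   Context: $\mathbb{F}$ is a field, $Y=\{y_1,\dots,y_m\}$ and $Z=\{z_1,\dots,z_m\}$ are disjoint sets of variables. For $f\in\mathbb{F}[Y,Z]$, the polynomial coefficient matrix $M_f$ is the $2^m\times 2^m$ matrix with entries in $\mathbb{F}[Y,Z]$, rows indexed by monic multilinear monomials $p$ in $Y$ and columns by monic multilinear monomials $q$ in $Z$, where $M_f(p,q)=G$ if and only if $f$ can be uniquely written as $f=pq\,G+Q$ with $G$ containing no variable other than those present in $p$ and $q$, and $Q$ having no monomial which is divisible by $pq$ and contains only variables present in $p$ and $q$. For $S:Y\cup Z\to\mathbb{F}$, $M_f|_S$ is obtained by evaluating each entry at $S$, and $\mathrm{maxrank}(M_f)=\max_S\mathrm{rank}(M_f|_S)$. *)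

(* Defs.v *)
From HB Require Import structures.
From mathcomp Require Import all_boot all_algebra.
From mathcomp Require Import boolp.
From mathcomp Require Import mpoly.
Set Implicit Arguments. Unset Strict Implicit. Unset Printing Implicit Defensive.
Import GRing.Theory.
Local Open Scope ring_scope.

(* Variables of F[Y,Z]: indices 'I_(m + m); y_i = 'X_(lshift m i), z_j = 'X_(rshift m j). *)

(* The set of variables occurring in the multilinear monomials
   p = prod_{i in A} y_i and q = prod_{j in B} z_j. *)
Definition pqvars (m : nat) (A B : {set 'I_m}) : {set 'I_(m + m)} :=
  (@lshift m m) @: A :|: (@rshift m m) @: B.

(* The entry M_f(p,q) = G, where f = p q G + Q, G only contains variables of p q,
   and Q has no monomial divisible by p q containing only variables of p q.
   The monomials of f that are divisible by pq and only contain variables of pq are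
   exactly those whose support is pqvars A B; G collects them divided by pq. *)
Definition pcm_entry (F : fieldType) (m : nat) (f : {mpoly F[m + m]})
    (A B : {set 'I_m}) : {mpoly F[m + m]} :=
  \sum_(mon <- msupp f | [forall i, (mon i != 0%N) == (i \in pqvars A B)])
     f@_mon *: 'X_[ [multinom (mon i).-1 | i < m + m] ].

(* The polynomial coefficient matrix, rows indexed by subsets A of Y (monomials p),
   columns by subsets B of Z (monomials q), via an enumeration of {set 'I_m}
   (which has 2^m elements). *)
Definition pcm (F : fieldType) (m : nat) (f : {mpoly F[m + m]}) :
    'M[{mpoly F[m + m]}]_(#|{set 'I_m}|, #|{set 'I_m}|) :=
  \matrix_(i, j) pcm_entry f (enum_val i) (enum_val j).

Definition pcm_eval (F : fieldType) (m : nat) (f : {mpoly F[m + m]})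
    (S : 'I_(m + m) -> F) : 'M[F]_(#|{set 'I_m}|, #|{set 'I_m}|) :=
  map_mx (fun G => G.@[S]) (pcm f).

(* maxrank(M_f) = max_S rank(M_f|_S) (ranks are bounded by 2^m). *)
Definition maxrank (F : fieldType) (m : nat) (f : {mpoly F[m + m]}) : nat :=
  \max_(r < (#|{set 'I_m}|).+1 | `[< exists S, \rank (pcm_eval f S) = r >]) (r : nat).

Definition inFY (F : fieldType) (m : nat) (g : {mpoly F[m + m]}) : Prop :=
  forall mon, mon \in msupp g -> forall j : 'I_m, mon (rshift m j) = 0%N.
Definition inFZ (F : fieldType) (m : nat) (g : {mpoly F[m + m]}) : Prop :=
  forall mon, mon \in msupp g -> forall i : 'I_m, mon (lshift m i) = 0%N.

(* Main.v *)
Require Import Defs.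
From HB Require Import structures.
From mathcomp Require Import all_boot all_algebra.
From mathcomp Require Import zify.
From mathcomp Require Import mpoly.
From mathcomp Require Import boolp.
Set Implicit Arguments. Unset Strict Implicit. Unset Printing Implicit Defensive.
Import GRing.Theory.
Local Open Scope ring_scope.

Section Gen.
Variables (F : fieldType) (n : nat).
Implicit Types (p q : {mpoly F[n]}) (mon : 'X_{1..n}).

Definition L (phi : 'X_{1..n} -> {mpoly F[n]}) p :=
  \sum_(mon <- msupp p) p@_mon *: phi mon.

Lemma L_seq phi p s : uniq s -> {subset msupp p <= s} ->
  L phi p = \sum_(mon <- s) p@_mon *: phi mon.
Proof.
move=> us sub; rewrite (bigID (fun mon => mon \in msupp p)) /=.
rewrite [X in _ + X]big1 ?addr0; last first.
  by move=> mon /memN_msupp_eq0 ->; rewrite scale0r.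
rewrite -big_filter /L; apply: perm_big.
apply: uniq_perm; first exact: msupp_uniq; first by rewrite filter_uniq.
move=> x; rewrite mem_filter; apply/idP/andP => [h|[]//]; split => //; exact: sub.
Qed.

Lemma L_add phi p q : L phi (p + q) = L phi p + L phi q.
Proof.
set s := undup (msupp p ++ msupp q ++ msupp (p+q)).
have us : uniq s by apply: undup_uniq.
have s1 : {subset msupp p <= s} by move=> x hx; rewrite mem_undup !mem_cat hx.
have s2 : {subset msupp q <= s} by move=> x hx; rewrite mem_undup !mem_cat hx orbT.
have s3 : {subset msupp (p+q) <= s} by move=> x hx; rewrite mem_undup !mem_cat hx !orbT.
rewrite (L_seq _ us s1) (L_seq _ us s2) (L_seq _ us s3) -big_split /=.
by apply: eq_bigr => mon _; rewrite mcoeffD scalerDl.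
Qed.

Lemma L_scale phi c p : L phi (c *: p) = c *: L phi p.
Proof.
rewrite (@L_seq _ _ (msupp p)) ?msupp_uniq //; last exact: msuppZ_le.
by rewrite /L scaler_sumr; apply: eq_bigr => mon _; rewrite mcoeffZ scalerA.
Qed.

Lemma L0 phi : L phi 0 = 0.
Proof. by rewrite /L msupp0 big_nil. Qed.

Lemma L_sum phi I (r : seq I) (P : pred I) Fi :
  L phi (\sum_(i <- r | P i) Fi i) = \sum_(i <- r | P i) L phi (Fi i).
Proof. by elim/big_rec2: _ => [|i y1 y2 _ <-]; rewrite ?L0 ?L_add. Qed.

Lemma LX phi mon : L phi 'X_[mon] = phi mon.
Proof. by rewrite /L msuppX big_seq1 mcoeffX eqxx scale1r. Qed.

Definition suppb mon (V : {set 'I_n}) := [forall i, (mon i != 0%N) == (i \in V)].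
Definition mpred mon : 'X_{1..n} := [multinom (mon i).-1 | i < n].
Definition phi V mon : {mpoly F[n]} :=
  if suppb mon V then 'X_[mpred mon] else 0.
Definition psi (V V' : {set 'I_n}) mon : {mpoly F[n]} :=
  if [forall i, (i \in V) == ((mon i != 0%N) || (i \in V'))] then
    'X_[[multinom (if i \in V :\: V' then (mon i).-1 else mon i) | i < n]]
  else 0.
Definition hh g V V' := L (psi V V') g.

Lemma mono_id V m1 m2 :
  phi V (m1 + m2) = \sum_(V' : {set 'I_n}) psi V V' m2 * phi V' m1.
Proof.
pose V0 := [set i | m1 i != 0%N].
rewrite (bigD1 V0) //= big1 ?addr0; last first.
  move=> V' hV'; rewrite /phi; case: ifP; last by rewrite mulr0.
  move/forallP => H; exfalso; move/eqP: hV'; apply; apply/setP => i.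
  by rewrite [in RHS]inE (eqP (H i)).
have s0 : suppb m1 V0 by apply/forallP => i; rewrite inE.
rewrite /phi s0 /psi.
have Ceq : suppb (m1+m2) V =
   [forall i, (i \in V) == ((m2 i != 0%N) || (i \in V0))].
  apply/forallP/forallP => H i; move: (H i); rewrite mnmDE inE;
  case: (i \in V); case: (m1 i) => [|a]; case: (m2 i) => [|b] //=; lia.
rewrite -Ceq; case: ifP => hC; last by rewrite mul0r.
rewrite -mpolyXD; congr 'X_[_]; apply/mnmP => i.
rewrite !(mnmE, mnmDE) in_setD inE.
move/forallP: hC => /(_ i); rewrite mnmDE.
case: (i \in V); case: (m1 i) => [|a]; case: (m2 i) => [|b] //=; lia.
Qed.

Lemma Lmul V f g :
  L (phi V) (f * g) = \sum_(V' : {set 'I_n}) hh g V V' * L (phi V') f.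
Proof.
have -> : f * g = \sum_(a <- msupp f) \sum_(b <- msupp g)
    (f@_a * g@_b) *: 'X_[a + b].
  rewrite {1}[f]mpolyE {1}[g]mpolyE big_distrl; apply: eq_bigr => a _.
  rewrite big_distrr; apply: eq_bigr => b _.
  rewrite mpolyXD -[LHS]/((f@_a *: 'X_[a]) * (g@_b *: 'X_[b])).
  by rewrite -scalerAl -scalerAr scalerA.
rewrite L_sum; under eq_bigr do rewrite L_sum.
under eq_bigr do under eq_bigr do rewrite L_scale LX mono_id scaler_sumr.
under [RHS]eq_bigr do rewrite /hh /L big_distrl /=.
under [RHS]eq_bigr do under eq_bigr do rewrite big_distrr /=.
rewrite [RHS]exchange_big /=; under [RHS]eq_bigr do rewrite exchange_big /=.
rewrite [RHS]exchange_big /=; apply: eq_bigr => a _; apply: eq_bigr => b _.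
apply: eq_bigr => V' _.
by rewrite -scalerAl -scalerAr scalerA mulrC.
Qed.

End Gen.

Section Conc.
Variables (F : fieldType) (m : nat).
Notation pq := (@pqvars m).
Implicit Types (f g : {mpoly F[m + m]}) (A B : {set 'I_m}).

Lemma ordsplit (P : 'I_(m + m) -> Prop) :
  (forall i, P (lshift m i)) -> (forall j, P (rshift m j)) -> forall k, P k.
Proof.
move=> hl hr k; rewrite -(splitK k); case: (split k) => [i|j] /=; [exact: hl|exact: hr].
Qed.

Lemma in_pq_l A B i : (lshift m i \in pq A B) = (i \in A).
Proof.
rewrite /pqvars in_setU mem_imset; last exact: lshift_inj.
case: (i \in A) => //=; apply/negbTE/imsetP => -[j _ /eqP]; by rewrite eq_lrshift.
Qed.

Lemma in_pq_r A B j : (rshift m j \in pq A B) = (j \in B).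
Proof.
rewrite /pqvars in_setU [X in _ || X]mem_imset; last exact: rshift_inj.
case: (j \in B); rewrite ?orbT //= orbF; apply/negbTE/imsetP => -[i _ /eqP].
by rewrite eq_sym eq_lrshift.
Qed.

Lemma pcm_entryL f A B : pcm_entry f A B = L (phi F (pq A B)) f.
Proof.
rewrite /pcm_entry /L big_mkcond; apply: eq_bigr => mon _.
by rewrite /phi /suppb; case: ifP; rewrite ?scaler0.
Qed.

Lemma pq_inj B : injective (fun A => pq A B).
Proof. by move=> A1 A2 E; apply/setP => i; rewrite -!(in_pq_l _ B) E. Qed.

Lemma pq_injr A : injective (fun B => pq A B).
Proof. by move=> B1 B2 E; apply/setP => i; rewrite -!(in_pq_r A) E. Qed.

Lemma KY f g A B : inFY g ->
  pcm_entry (f * g) A B =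
  \sum_(A' : {set 'I_m}) hh g (pq A set0) (pq A' set0) * pcm_entry f A' B.
Proof.
move=> Yg; rewrite pcm_entryL Lmul.
rewrite (bigID (fun V' => V' \in [set pq A' B | A' in [set: {set 'I_m}]])) /=.
rewrite [X in _ + X]big1 ?addr0; last first.
  move=> V' nV'; rewrite /hh /L big1_seq ?mul0r // => mon /andP[_ hmon].
  rewrite /psi; case: ifP; rewrite ?scaler0 // => /forallP H; exfalso.
  move/negP: nV'; apply; apply/imsetP; exists [set i | lshift m i \in V']; first by rewrite in_setT.
  apply/setP => k; move: k; apply: ordsplit => [i|j]; first by rewrite in_pq_l inE.
  rewrite in_pq_r; move: (H (rshift m j)); rewrite in_pq_r (Yg mon hmon j) /=.
  by move/eqP ->.
rewrite big_imset /=; last by move=> A1 A2 _ _; apply: pq_inj.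
apply: eq_big => [A'|A' _]; first by rewrite in_setT. rewrite pcm_entryL; congr (_ * _).
rewrite /hh /L; apply: eq_big_seq => mon hmon; congr (_ *: _).
rewrite /psi.
have -> : pq A B :\: pq A' B = pq A set0 :\: pq A' set0.
  apply/setP => k; move: k; apply: ordsplit => [i|j]; by rewrite !in_setD ?in_pq_l ?in_pq_r ?inE //; case: (_ \in _).
congr (if _ then _ else _); apply/forallP/forallP => H k; move: k; apply: ordsplit => [i|j].
- by move: (H (lshift m i)); rewrite !in_pq_l.
- by rewrite !in_pq_r (Yg mon hmon j) inE.
- by move: (H (lshift m i)); rewrite !in_pq_l.
- by rewrite !in_pq_r (Yg mon hmon j).
Qed.

Lemma KZ f g A B : inFZ g ->
  pcm_entry (f * g) A B =
  \sum_(B' : {set 'I_m}) pcm_entry f A B' * hh g (pq set0 B) (pq set0 B').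
Proof.
move=> Zg; rewrite pcm_entryL Lmul.
rewrite (bigID (fun V' => V' \in [set pq A B' | B' in [set: {set 'I_m}]])) /=.
rewrite [X in _ + X]big1 ?addr0; last first.
  move=> V' nV'; rewrite /hh /L big1_seq ?mul0r // => mon /andP[_ hmon].
  rewrite /psi; case: ifP; rewrite ?scaler0 // => /forallP H; exfalso.
  move/negP: nV'; apply; apply/imsetP; exists [set j | rshift m j \in V']; first by rewrite in_setT.
  apply/setP => k; move: k; apply: ordsplit => [i|j]; last by rewrite in_pq_r inE.
  rewrite in_pq_l; move: (H (lshift m i)); rewrite in_pq_l (Zg mon hmon i) /=.
  by move/eqP ->.
rewrite big_imset /=; last by move=> A1 A2 _ _; apply: pq_injr.
apply: eq_big => [B'|B' _]; first by rewrite in_setT. rewrite pcm_entryL mulrC; congr (_ * _).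
rewrite /hh /L; apply: eq_big_seq => mon hmon; congr (_ *: _).
rewrite /psi.
have -> : pq A B :\: pq A B' = pq set0 B :\: pq set0 B'.
  apply/setP => k; move: k; apply: ordsplit => [i|j]; by rewrite !in_setD ?in_pq_l ?in_pq_r ?inE //; case: (_ \in _).
congr (if _ then _ else _); apply/forallP/forallP => H k; move: k; apply: ordsplit => [i|j].
- by rewrite !in_pq_l (Zg mon hmon i) inE.
- by move: (H (rshift m j)); rewrite !in_pq_r.
- by rewrite !in_pq_l (Zg mon hmon i).
- by move: (H (rshift m j)); rewrite !in_pq_r.
Qed.

End Conc.

Lemma sum_sets (R : nmodType) (m : nat) (G : {set 'I_m} -> R) :
  \sum_(A : {set 'I_m}) G A = \sum_(k < #|{set 'I_m}|) G (enum_val k).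
Proof.
rewrite (reindex (@enum_val _ predT)) //=.
exists (@enum_rank _) => x _; [exact: enum_valK | exact: enum_rankK].
Qed.

Lemma rank_le (F : fieldType) (m : nat) (f g : {mpoly F[m + m]}) S :
  inFY g \/ inFZ g -> (\rank (pcm_eval (f * g) S) <= \rank (pcm_eval f S))%N.
Proof.
case=> [Yg|Zg].
  pose H : 'M[F]_(#|{set 'I_m}|, #|{set 'I_m}|) := \matrix_(i, k) (hh g (pqvars (enum_val i) set0) (pqvars (enum_val k) set0)).@[S].
  have -> : pcm_eval (f * g) S = H *m pcm_eval f S.
    apply/matrixP => i j; rewrite !mxE KY // raddf_sum sum_sets.
    apply: eq_bigr => k _; rewrite !mxE; exact: mevalM.
  exact: mxrankM_maxr.
pose H : 'M[F]_(#|{set 'I_m}|, #|{set 'I_m}|) := \matrix_(k, j) (hh g (pqvars set0 (enum_val j)) (pqvars set0 (enum_val k))).@[S].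
have -> : pcm_eval (f * g) S = pcm_eval f S *m H.
  apply/matrixP => i j; rewrite !mxE KZ // raddf_sum sum_sets.
  apply: eq_bigr => k _; rewrite !mxE; exact: mevalM.
exact: mxrankM_maxl.
Qed.

Theorem proposition4 (F : fieldType) (m : nat) (f g : {mpoly F[m + m]}) :
  inFY g \/ inFZ g -> (maxrank (f * g) <= maxrank f)%N.
Proof.
move=> hg; rewrite {1}/maxrank; apply/bigmax_leqP => r /asboolP [S hS].
have hlt : (\rank (pcm_eval f S) < (#|{set 'I_m}|).+1)%N by rewrite ltnS rank_leq_row.
rewrite -hS (leq_trans (rank_le f S hg)) //.
apply: (leq_trans _ (leq_bigmax_cond (Ordinal hlt) _)) => //.
by apply/asboolP; exists S.
Qed.
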